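(* Let $n\ge2$, $0<\alpha\le1/\sqrt2$, $\nu=\pi/4$, $x_i = -1+\frac{2i}{n-1}$ ($i=0,\dots,n-1$), and define $\bar{\mathbf{X}}\in\mathbb{R}^{n\times n}$ by $\bar{\mathbf{X}}_{ij} = \mathbf{1}\{\|\mathbf{R}_\nu^\top(x_i,x_j)^\top\|_\infty\le\alpha\}$ with $\mathbf{R}_\nu = \begin{bmatrix}\cos\nu&-\sin\nu\\ \sin\nu&\cos\nu\end{bmatrix}$. Then $$\|\bar{\mathbf{X}}\|_F^2\ge n^2\alpha^2 - 5n.$$
   Context: $\|\cdot\|_F$ is the Frobenius norm. *)

(* Defs.v *)
From Stdlib Require Import Reals Lra.
Open Scope R_scope.

Definition grid (n i : nat) : R := -1 + 2 * INR i / INR (n - 1).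

Definition nu : R := PI / 4.

(* R_nu^T (a,b)^T, with R_nu = [[cos nu, -sin nu],[sin nu, cos nu]] *)
Definition rotT1 (a b : R) : R := cos nu * a + sin nu * b.
Definition rotT2 (a b : R) : R := - sin nu * a + cos nu * b.

Definition norm_inf2 (u v : R) : R := Rmax (Rabs u) (Rabs v).

Definition Xbar (n : nat) (alpha : R) (i j : nat) : R :=
  if Rle_dec (norm_inf2 (rotT1 (grid n i) (grid n j)) (rotT2 (grid n i) (grid n j))) alpha
  then 1 else 0.

Definition frob_sq (n : nat) (M : nat -> nat -> R) : R :=
  sum_f_R0 (fun i => sum_f_R0 (fun j => (M i j) ^ 2) (n - 1)) (n - 1).

(* Main.v *)
Require Import Defs.
From Stdlib Require Import Reals Lra Psatz.
Open Scope R_scope.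

Lemma count_lb (f : nat -> R) (a b v : R) (N : nat) :
  0 <= a -> 0 <= v -> (forall j, 0 <= f j) ->
  (forall j, a <= INR j <= b -> v <= f j) ->
  v * (Rmin b (INR N + 1) - a - 1) <= sum_f_R0 f N.
Proof.
  intros Ha Hv Hf Hab.
  induction N as [|N IH].
  - simpl. unfold Rmin. destruct (Rle_dec b (0+1)).
    + destruct (Rle_dec a 0); destruct (Rle_dec 0 b).
      * assert (v <= f 0%nat) by (apply Hab; simpl; lra). nra.
      * specialize (Hf 0%nat). nra.
      * specialize (Hf 0%nat). nra.
      * specialize (Hf 0%nat). nra.
    + destruct (Rle_dec a 0).
      * assert (v <= f 0%nat) by (apply Hab; simpl; lra). nra.
      * specialize (Hf 0%nat). nra.
  - simpl sum_f_R0. rewrite S_INR.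
    assert (Hs : 0 <= sum_f_R0 f N) by (apply cond_pos_sum; auto).
    pose proof (Hf (S N)) as HfS.
    destruct (Rle_dec (INR N + 1) b).
    + destruct (Rle_dec a (INR N + 1)).
      * assert (v <= f (S N)) by (apply Hab; rewrite S_INR; lra).
        revert IH; unfold Rmin; destruct (Rle_dec b (INR N + 1)); destruct (Rle_dec b (INR N + 1 + 1)); intros; nra.
      * revert IH; unfold Rmin; destruct (Rle_dec b (INR N + 1)); destruct (Rle_dec b (INR N + 1 + 1)); intros; nra.
    + revert IH; unfold Rmin; destruct (Rle_dec b (INR N + 1)); destruct (Rle_dec b (INR N + 1 + 1)); intros; nra.
Qed.

Lemma layer_ub (t L : R) (K : nat) :
  sum_f_R0 (fun k => if Rle_dec t (L - 2 * (INR k + 1)) then 2 else 0) K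
  <= Rmin (2 * (INR K + 1)) (Rmax 0 (L - t)).
Proof.
  induction K as [|K IH].
  - simpl. unfold Rmin, Rmax.
    repeat match goal with |- context[Rle_dec ?x ?y] => destruct (Rle_dec x y) end; lra.
  - rewrite tech5. set (s := sum_f_R0 _ K) in *. rewrite S_INR. revert IH. unfold Rmin, Rmax. pose proof (pos_INR K).
    repeat match goal with |- context[Rle_dec ?x ?y] => destruct (Rle_dec x y) end; intros; lra.
Qed.

Lemma sum_exch (F : nat -> nat -> R) (N K : nat) :
  sum_f_R0 (fun i => sum_f_R0 (fun k => F i k) K) N =
  sum_f_R0 (fun k => sum_f_R0 (fun i => F i k) N) K.
Proof.
  induction N as [|N IH].
  - reflexivity.
  - rewrite tech5, IH, <- plus_sum. apply sum_eq; intros; rewrite tech5; reflexivity.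
Qed.

Lemma lin_sum (L : R) (K : nat) :
  sum_f_R0 (fun k => 2 * (L - 2 * (INR k + 1) - 1)) K = (INR K + 1) * (2 * L - 6 - 2 * INR K).
Proof.
  induction K as [|K IH].
  - simpl. ring.
  - rewrite tech5, IH, S_INR. ring.
Qed.

Lemma floor_ex (y : R) : 0 <= y -> exists k : nat, INR k <= y < INR k + 1.
Proof.
  intros Hy. destruct (INR_unbounded y) as [N HN].
  revert y Hy HN. induction N as [|N IH]; intros y Hy HN.
  - simpl in HN. lra.
  - rewrite S_INR in HN. destruct (Rlt_dec y (INR N)).
    + apply IH; lra.
    + exists N. lra.
Qed.

Theorem mainTheorem7 (n : nat) (alpha : R) :
  (2 <= n)%nat -> 0 < alpha -> alpha <= 1 / sqrt 2 ->
  frob_sq n (Xbar n alpha) >= INR n ^ 2 * alpha ^ 2 - 5 * INR n.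
Proof.
  intros Hn Ha Hal.
  destruct n as [|m]; [lia|].
  assert (Hm1 : 1 <= INR m) by (apply (le_INR 1); lia).
  set (M := INR m) in *.
  assert (HmM : (S m - 1)%nat = m) by lia.
  set (r := sqrt 2).
  assert (Hr0 : 0 < r) by (apply sqrt_lt_R0; lra).
  assert (Hrr : r * r = 2) by (apply sqrt_sqrt; lra).
  assert (Har : alpha * r <= 1).
  { fold r in Hal. apply (Rmult_le_compat_r r) in Hal; [|lra].
    replace (1 / r * r) with 1 in Hal by (field; lra). exact Hal. }
  set (c := alpha * r * M / 2).
  assert (Har0 : 0 <= alpha * r) by nra.
  assert (Hc0 : 0 <= c) by (unfold c; apply Rmult_le_pos; [apply Rmult_le_pos; lra|lra]).
  assert (HcM : c <= M / 2).
  { unfold c. assert (alpha * r * M <= 1 * M) by (apply Rmult_le_compat_r; lra). lra. }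
  set (L := 2 * c - 1).
  assert (Hrow : forall i, (i <= m)%nat ->
    Rmax 0 (L - Rabs (M - 2 * INR i)) <=
    sum_f_R0 (fun j => Xbar (S m) alpha i j ^ 2) m).
  { intros i Hi.
    assert (HiM : INR i <= M) by (apply le_INR; lia).
    pose proof (pos_INR i) as Hi0.
    apply Rmax_lub.
    - apply cond_pos_sum. intros; apply pow2_ge_0.
    - set (a := Rmax (INR i) (M - INR i) - c).
      set (b := Rmin (INR i) (M - INR i) + c).
      assert (Ha0 : 0 <= a).
      { unfold a, Rmax; destruct (Rle_dec (INR i) (M - INR i)); lra. }
      assert (HbM : b <= M).
      { unfold b, Rmin; destruct (Rle_dec (INR i) (M - INR i)); lra. }
      assert (Hba : b - a = 2 * c - Rabs (M - 2 * INR i)).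
      { unfold a, b, Rmin, Rmax; destruct (Rle_dec (INR i) (M - INR i));
        unfold Rabs; destruct (Rcase_abs (M - 2 * INR i)); lra. }
      pose proof (count_lb (fun j => Xbar (S m) alpha i j ^ 2) a b 1 m Ha0 ltac:(lra)
        ltac:(intros; apply pow2_ge_0)) as H.
      assert (Hmin : Rmin b (INR m + 1) = b) by (apply Rmin_left; fold M; lra).
      rewrite Hmin in H. unfold L.
      enough (1 * (b - a - 1) <= sum_f_R0 (fun j : nat => Xbar (S m) alpha i j ^ 2) m) by lra.
      apply H. intros j [Hj1 Hj2].
      assert (Hs : Rabs (INR i + INR j - M) <= c /\ Rabs (INR j - INR i) <= c).
      { revert Hj1 Hj2. unfold a, b, Rmin, Rmax; destruct (Rle_dec (INR i) (M - INR i));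
        intros; split; apply Rabs_le; lra. }
      destruct Hs as [Hs1 Hs2].
      unfold Xbar. destruct (Rle_dec _ _) as [_|Hn']; [lra|exfalso; apply Hn'].
      unfold norm_inf2, rotT1, rotT2, nu, grid. rewrite cos_PI4, sin_PI4, HmM. fold r M.
      assert (HM0 : 0 < M) by lra.
      assert (Hk : 0 < 2 / (r * M)) by (apply Rdiv_lt_0_compat; nra).
      assert (Hca : c * (2 / (r * M)) = alpha) by (unfold c; field; lra).
      apply Rmax_lub.
      + replace (1 / r * (-1 + 2 * INR i / M) + 1 / r * (-1 + 2 * INR j / M))
          with ((INR i + INR j - M) * (2 / (r * M))) by (field; lra).
        rewrite Rabs_mult, (Rabs_right (2 / (r * M))) by lra.
        rewrite <- Hca. apply Rmult_le_compat_r; lra.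
      + replace (- (1 / r) * (-1 + 2 * INR i / M) + 1 / r * (-1 + 2 * INR j / M))
          with ((INR j - INR i) * (2 / (r * M))) by (field; lra).
        rewrite Rabs_mult, (Rabs_right (2 / (r * M))) by lra.
        rewrite <- Hca. apply Rmult_le_compat_r; lra. }
  assert (Htot : sum_f_R0 (fun i => Rmax 0 (L - Rabs (M - 2 * INR i))) m <= frob_sq (S m) (Xbar (S m) alpha)).
  { unfold frob_sq. rewrite HmM. apply sum_Rle. intros; apply Hrow; auto. }
  assert (Htarget : INR (S m) ^ 2 * alpha ^ 2 - 5 * INR (S m) <= 2 * c * c - 4 * M - 9/2).
  { rewrite S_INR. fold M.
    assert (H2 : 2 * c * c = alpha * alpha * M * M) by (unfold c; nra).
    assert (Haa : 2 * (alpha * alpha) <= 1) by nra.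
    nra. }
  apply Rle_ge.
  destruct (Rlt_dec c (5/2)) as [Hc|Hc].
  - assert (0 <= sum_f_R0 (fun i => Rmax 0 (L - Rabs (M - 2 * INR i))) m)
      by (apply cond_pos_sum; intros; apply Rmax_l).
    nra.
  - destruct (floor_ex (c - 3/2) ltac:(lra)) as [k [Hk1 Hk2]].
    destruct k as [|K]; [simpl in Hk2; lra|].
    rewrite S_INR in Hk1, Hk2.
    set (g := fun k i => if Rle_dec (Rabs (M - 2 * INR i)) (L - 2 * (INR k + 1)) then 2 else 0).
    assert (H1 : sum_f_R0 (fun i => sum_f_R0 (fun k => g k i) K) m <=
                 sum_f_R0 (fun i => Rmax 0 (L - Rabs (M - 2 * INR i))) m).
    { apply sum_Rle. intros i _. eapply Rle_trans; [apply layer_ub|apply Rmin_r]. }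
    rewrite sum_exch in H1.
    assert (H2 : sum_f_R0 (fun k => 2 * (L - 2 * (INR k + 1) - 1)) K <=
                 sum_f_R0 (fun k => sum_f_R0 (fun i => g k i) m) K).
    { apply sum_Rle. intros k Hk.
      assert (HkK : INR k <= INR K) by (apply le_INR; lia).
      pose proof (pos_INR k).
      set (L' := L - 2 * (INR k + 1)).
      pose proof (count_lb (fun i => g k i) ((M - L') / 2) ((M + L') / 2) 2 m
        ltac:(unfold L', L; lra) ltac:(lra)
        ltac:(intros; unfold g; destruct (Rle_dec _ _); lra)) as Hc3.
      rewrite Rmin_left in Hc3 by (fold M; unfold L', L; lra).
      enough (2 * ((M + L') / 2 - (M - L') / 2 - 1) <= sum_f_R0 (fun i : nat => g k i) m)
        by (unfold L' in *; lra).
      apply Hc3. intros j [Hj1 Hj2]. unfold g.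
      destruct (Rle_dec _ _) as [_|Hn']; [lra|exfalso; apply Hn'].
      fold L'. apply Rabs_le; lra. }
    rewrite lin_sum in H2.
    pose proof (pos_INR K).
    assert (Hfin : 2 * c * c - 4 * M - 9/2 <= (INR K + 1) * (2 * L - 6 - 2 * INR K)).
    { unfold L. set (x := INR K + 1) in *.
      assert (0 <= (c - 3/2 - x)) by lra.
      assert ((c - 3/2 - x) < 1) by lra.
      replace (INR K) with (x - 1) by (unfold x; ring).
      assert (Hsq : (c - 3/2 - x) * (c - 3/2 - x) <= 1) by nra.
      assert (E : x * (2 * (2 * c - 1) - 6 - 2 * (x - 1)) = 2 * (c - 3/2) * (c - 3/2) - 2 * ((c - 3/2 - x) * (c - 3/2 - x))) by field.
      rewrite E. nra. }
    lra.
Qed.
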